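(* Let $\Omega_S$ be the infinite square lattice graph, i.e. the graph with vertex set $\mathbb{Z}^2$ in which $(a,b)$ and $(c,d)$ are adjacent iff $|a-c|+|b-d|=1$. Then $\chi_{td}(\Omega_S) = 8$.
   Context: For a (possibly infinite) simple graph $G$ and a positive integer $k$, a proper $k$-total difference labeling of $G$ is a function $f: V(G)\to\{1,\dots,k\}$, extended to edges by $f(\{u,v\}) = |f(u)-f(v)|$, such that: (i) adjacent vertices receive different labels; (ii) two distinct edges sharing a vertex receive different labels; (iii) no edge receives the same label as either of its endpoints. $\chi_{td}(G)$ denotes the smallest $k$ for which $G$ has a proper $k$-total difference labeling. *)

(* Defs.v *)
From Stdlib Require Import ZArith.
Open Scope Z_scope.

Definition edge_label {V : Type} (f : V -> Z) (u v : V) : Z := Z.abs (f u - f v).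

Definition proper_total_difference_labeling {V : Type} (adj : V -> V -> Prop)
    (k : Z) (f : V -> Z) : Prop :=
  (forall v, 1 <= f v <= k) /\
  (forall u v, adj u v -> f u <> f v) /\
  (forall u v w, adj u v -> adj u w -> v <> w -> edge_label f u v <> edge_label f u w) /\
  (forall u v, adj u v -> edge_label f u v <> f u /\ edge_label f u v <> f v).

Definition has_ptdl {V : Type} (adj : V -> V -> Prop) (k : Z) : Prop :=
  exists f : V -> Z, proper_total_difference_labeling adj k f.

Definition chi_td_eq {V : Type} (adj : V -> V -> Prop) (k : Z) : Prop :=
  1 <= k /\ has_ptdl adj k /\ (forall j, 1 <= j -> has_ptdl adj j -> k <= j).

Definition square_lattice_adj (p q : Z * Z) : Prop :=
  Z.abs (fst p - fst q) + Z.abs (snd p - snd q) = 1.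

(* Main.v *)
Require Import Defs.
From Stdlib Require Import ZArith List Lia Bool.
Import ListNotations.
Open Scope Z_scope.

Definition tbl (r : Z) : Z :=
  if r =? 0 then 1 else if r =? 1 then 3 else if r =? 2 then 7
  else if r =? 3 then 2 else if r =? 4 then 6 else 8.

Definition F (t : Z) : Z := tbl (t mod 6).
Definition lab (p : Z * Z) : Z := F (fst p + 2 * snd p).

Definition D : list Z := [1; -1; 2; -2].
Definition R6 : list Z := [0;1;2;3;4;5].

Definition good1 (c x : Z) : bool :=
  negb (c =? x) && negb (Z.abs (c - x) =? c) && negb (Z.abs (c - x) =? x).

Definition upchk : bool :=
  forallb (fun r =>
    (1 <=? tbl r) && (tbl r <=? 8) &&
    forallb (fun d => good1 (tbl r) (tbl ((r + d) mod 6)) &&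
      forallb (fun d' => (d =? d') ||
         negb (Z.abs (tbl r - tbl ((r + d) mod 6)) =? Z.abs (tbl r - tbl ((r + d') mod 6)))) D) D) R6.

Lemma upchk_true : upchk = true.
Proof. vm_compute. reflexivity. Qed.

Lemma mod6_in (t : Z) : In (t mod 6) R6.
Proof.
  assert (0 <= t mod 6 < 6) by (apply Z.mod_pos_bound; lia).
  unfold R6; simpl In.
  assert (t mod 6 = 0 \/ t mod 6 = 1 \/ t mod 6 = 2 \/ t mod 6 = 3 \/ t mod 6 = 4 \/ t mod 6 = 5) by lia.
  intuition.
Qed.

Lemma F_shift t d : F (t + d) = tbl ((t mod 6 + d) mod 6).
Proof. unfold F. rewrite Zplus_mod_idemp_l. reflexivity. Qed.

Lemma adj_d (u v : Z * Z) : square_lattice_adj u v ->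
  In ((fst v + 2 * snd v) - (fst u + 2 * snd u)) D.
Proof.
  unfold square_lattice_adj, D; cbn [fst snd]; intros H.
  destruct u as [a b], v as [c e]; cbn [fst snd] in *.
  assert (c + 2*e - (a + 2*b) = 1 \/ c + 2*e - (a + 2*b) = -1 \/
          c + 2*e - (a + 2*b) = 2 \/ c + 2*e - (a + 2*b) = -2) by lia.
  repeat destruct H0 as [H0|H0]; rewrite H0; simpl; tauto.
Qed.

Lemma adj_inj (u v w : Z * Z) : square_lattice_adj u v -> square_lattice_adj u w ->
  (fst v + 2 * snd v) - (fst u + 2 * snd u) = (fst w + 2 * snd w) - (fst u + 2 * snd u) ->
  v = w.
Proof.
  unfold square_lattice_adj; destruct u as [a b], v as [c e], w as [g h]; cbn [fst snd].
  intros H1 H2 H3. assert (E1 : c = g) by lia. assert (E2 : e = h) by lia. subst; reflexivity.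
Qed.

Lemma lab_nb u v : lab v = F ((fst u + 2 * snd u) + ((fst v + 2 * snd v) - (fst u + 2 * snd u))).
Proof. unfold lab. f_equal. lia. Qed.

Lemma upper : has_ptdl square_lattice_adj 8.
Proof.
  exists lab.
  pose proof upchk_true as U. unfold upchk in U.
  rewrite forallb_forall in U.
  unfold proper_total_difference_labeling, edge_label.
  split; [|split; [|split]].
  - intros v. unfold lab, F. specialize (U _ (mod6_in (fst v + 2 * snd v))).
    apply andb_true_iff in U as [U _]. apply andb_true_iff in U as [U1 U2].
    apply Z.leb_le in U1; apply Z.leb_le in U2. lia.
  - intros u v H. rewrite (lab_nb u v). pose proof (adj_d u v H) as Hd.
    set (t := fst u + 2 * snd u) in *. set (d := _ - t) in *.
    unfold lab; fold t. rewrite F_shift. unfold F.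
    specialize (U _ (mod6_in t)). apply andb_true_iff in U as [_ U].
    rewrite forallb_forall in U. specialize (U _ Hd).
    apply andb_true_iff in U as [U _]. unfold good1 in U.
    apply andb_true_iff in U as [U _]. apply andb_true_iff in U as [U _].
    apply negb_true_iff, Z.eqb_neq in U. exact U.
  - intros u v w H1 H2 Hvw. rewrite (lab_nb u v), (lab_nb u w).
    pose proof (adj_d u v H1) as Hd. pose proof (adj_d u w H2) as Hd'.
    assert (Hne : (fst v + 2 * snd v) - (fst u + 2 * snd u) <> (fst w + 2 * snd w) - (fst u + 2 * snd u)).
    { intro E. apply Hvw. eapply adj_inj; eauto. }
    set (t := fst u + 2 * snd u) in *.
    set (d := fst v + 2 * snd v - t) in *. set (d' := fst w + 2 * snd w - t) in *.
    unfold lab; fold t. rewrite !F_shift. unfold F.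
    specialize (U _ (mod6_in t)). apply andb_true_iff in U as [_ U].
    rewrite forallb_forall in U. specialize (U _ Hd).
    apply andb_true_iff in U as [_ U]. rewrite forallb_forall in U. specialize (U _ Hd').
    apply orb_true_iff in U as [U|U].
    + apply Z.eqb_eq in U. contradiction.
    + apply negb_true_iff, Z.eqb_neq in U. exact U.
  - intros u v H. rewrite (lab_nb u v). pose proof (adj_d u v H) as Hd.
    set (t := fst u + 2 * snd u) in *. set (d := _ - t) in *.
    unfold lab; fold t. rewrite F_shift. unfold F.
    specialize (U _ (mod6_in t)). apply andb_true_iff in U as [_ U].
    rewrite forallb_forall in U. specialize (U _ Hd).
    apply andb_true_iff in U as [U _]. unfold good1 in U.
    apply andb_true_iff in U as [U U3]. apply andb_true_iff in U as [_ U2].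
    apply negb_true_iff, Z.eqb_neq in U2. apply negb_true_iff, Z.eqb_neq in U3.
    split; assumption.
Qed.

Definition inr7 (x : Z) : bool := (1 <=? x) && (x <=? 7).

Definition gd (c a : Z) : bool :=
  inr7 a && negb (a =? c) && negb (Z.abs (c - a) =? c) && negb (Z.abs (c - a) =? a).
Definition ne (c a b : Z) : bool := negb (Z.abs (c - a) =? Z.abs (c - b)).

Definition star_ok (c a1 a2 a3 a4 : Z) : bool :=
  inr7 c && gd c a1 && gd c a2 && gd c a3 && gd c a4 &&
  ne c a1 a2 && ne c a1 a3 && ne c a1 a4 && ne c a2 a3 && ne c a2 a4 && ne c a3 a4.

Definition memZ (x : Z) (l : list Z) : bool := existsb (Z.eqb x) l.

Definition chk (S T : list Z) : bool :=
  forallb (fun c => forallb (fun a1 => forallb (fun a2 => forallb (fun a3 =>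
    forallb (fun a4 => implb (star_ok c a1 a2 a3 a4) (memZ c T)) S) S) S) S) S.

Lemma memZ_In x l : memZ x l = true -> In x l.
Proof.
  unfold memZ. intros H. apply existsb_exists in H as [y [Hy E]].
  apply Z.eqb_eq in E. subst; assumption.
Qed.

Lemma chk_sound S T c a1 a2 a3 a4 : chk S T = true ->
  memZ c S = true -> memZ a1 S = true -> memZ a2 S = true -> memZ a3 S = true ->
  memZ a4 S = true -> star_ok c a1 a2 a3 a4 = true -> memZ c T = true.
Proof.
  unfold chk. intros H Hc H1 H2 H3 H4 Hs.
  apply memZ_In in Hc, H1, H2, H3, H4.
  rewrite forallb_forall in H. specialize (H _ Hc).
  rewrite forallb_forall in H. specialize (H _ H1).
  rewrite forallb_forall in H. specialize (H _ H2).
  rewrite forallb_forall in H. specialize (H _ H3).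
  rewrite forallb_forall in H. specialize (H _ H4).
  rewrite Hs in H. exact H.
Qed.

Definition R7 : list Z := [1;2;3;4;5;6;7].
Definition L1 : list Z := [1;2;5;6;7].
Definition L2 : list Z := [5;7].

Lemma chk1 : chk R7 L1 = true. Proof. vm_compute. reflexivity. Qed.
Lemma chk2 : chk L1 L2 = true. Proof. vm_compute. reflexivity. Qed.
Lemma chk3 : chk L2 [] = true. Proof. vm_compute. reflexivity. Qed.

Lemma inR7 x : 1 <= x <= 7 -> memZ x R7 = true.
Proof.
  intros H. assert (x = 1 \/ x = 2 \/ x = 3 \/ x = 4 \/ x = 5 \/ x = 6 \/ x = 7) by lia.
  repeat destruct H0 as [H0|H0]; subst; reflexivity.
Qed.

Lemma nb_adj (x y : Z) :
  square_lattice_adj (x, y) (x + 1, y) /\ square_lattice_adj (x, y) (x - 1, y) /\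
  square_lattice_adj (x, y) (x, y + 1) /\ square_lattice_adj (x, y) (x, y - 1).
Proof. unfold square_lattice_adj; cbn [fst snd]; repeat split; lia. Qed.

Lemma neq_pairs (x y : Z) :
  (x + 1, y) <> (x - 1, y) /\ (x + 1, y) <> (x, y + 1) /\ (x + 1, y) <> (x, y - 1) /\
  (x - 1, y) <> (x, y + 1) /\ (x - 1, y) <> (x, y - 1) /\ (x, y + 1) <> (x, y - 1).
Proof. repeat split; intro E; injection E; lia. Qed.

Lemma star_true j f x y : j <= 7 -> proper_total_difference_labeling square_lattice_adj j f ->
  star_ok (f (x, y)) (f (x + 1, y)) (f (x - 1, y)) (f (x, y + 1)) (f (x, y - 1)) = true.
Proof.
  intros Hj [Hr [Hi [Hii Hiii]]].
  unfold edge_label in *.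
  destruct (nb_adj x y) as [A1 [A2 [A3 A4]]].
  destruct (neq_pairs x y) as [N1 [N2 [N3 [N4 [N5 N6]]]]].
  assert (R : forall p, inr7 (f p) = true).
  { intros p. specialize (Hr p). unfold inr7. apply andb_true_iff; split; apply Z.leb_le; lia. }
  assert (G : forall q, square_lattice_adj (x, y) q -> gd (f (x, y)) (f q) = true).
  { intros q Hq. unfold gd. rewrite R. simpl.
    pose proof (Hi _ _ Hq). destruct (Hiii _ _ Hq).
    rewrite (proj2 (Z.eqb_neq _ _)) by congruence.
    rewrite (proj2 (Z.eqb_neq _ _)) by assumption.
    rewrite (proj2 (Z.eqb_neq _ _)) by assumption. reflexivity. }
  assert (NE : forall q r, square_lattice_adj (x, y) q -> square_lattice_adj (x, y) r -> q <> r ->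
     ne (f (x, y)) (f q) (f r) = true).
  { intros q r Hq Hr' Hqr. unfold ne. apply negb_true_iff, Z.eqb_neq. apply Hii; assumption. }
  unfold star_ok. rewrite R, !G by assumption. rewrite !NE by assumption. reflexivity.
Qed.

Lemma lower j : 1 <= j -> has_ptdl square_lattice_adj j -> 8 <= j.
Proof.
  intros Hj [f Hf].
  destruct (Z.le_gt_cases 8 j) as [H|H]; [exact H|exfalso].
  assert (Hj7 : j <= 7) by lia.
  assert (S0 : forall p, memZ (f p) R7 = true).
  { intros p. apply inR7. destruct Hf as [Hr _]. specialize (Hr p). lia. }
  assert (S1 : forall p, memZ (f p) L1 = true).
  { intros [x y]. eapply chk_sound; [exact chk1|apply S0..|exact (star_true j f x y Hj7 Hf)]. }
  assert (S2 : forall p, memZ (f p) L2 = true).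
  { intros [x y]. eapply chk_sound; [exact chk2|apply S1..|exact (star_true j f x y Hj7 Hf)]. }
  assert (S3 : memZ (f (0, 0)) [] = true).
  { eapply chk_sound; [exact chk3|apply S2..|exact (star_true j f 0 0 Hj7 Hf)]. }
  discriminate S3.
Qed.

Theorem mainTheorem2 : chi_td_eq square_lattice_adj 8.
Proof.
  unfold chi_td_eq. split; [lia|split].
  - exact upper.
  - exact lower.
Qed.
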